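(* Let $\alpha>0$, $\beta\ge0$, $h>0$, and $V'(h)>0$. Set $b=\beta/h^2$. For $\theta\in(0,2\pi)$, consider the complex quadratic equation in $z$ $$z^2+z\big(\alpha-b(e^{i\theta}-1)\big)-\alpha V'(h)\,(e^{i\theta}-1)=0 .$$ If $\theta=\pi$, this equation has no purely imaginary root $z\in i\mathbb{R}$. If $\theta\neq\pi$, it has a purely imaginary root if and only if $$V'(h)=\frac{\alpha}{2\cos^2(\theta/2)}+b+2\tan^2(\theta/2)\, b\left(\frac{b}{\alpha}+1\right).$$
   Context: This quadratic is the characteristic equation obtained by substituting Fourier modes $y_n(t)=\exp(i\theta n+zt)$ into the linearization $$\ddot y_n=\alpha\big(V'(h)(y_{n+1}-y_n)-\dot y_n\big)+\frac{\beta}{h^2}(\dot y_{n+1}-\dot y_n)$$ of the single-lane model $$\dot x_n=v_n,\qquad \dot v_n=\alpha(V(x_{n+1}-x_n)-v_n)+\beta\frac{v_{n+1}-v_n}{(x_{n+1}-x_n)^2}$$ around the uniform flow with headway $h$. Here $V$ is a differentiable optimal velocity function. For a ring with $N$ vehicles, the admissible values are $\theta=a_k=2\pi k/N$. *)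

(* Defs.v *)
From mathcomp Require Import all_boot all_algebra.
From mathcomp Require Import all_classical all_reals all_analysis.
From mathcomp Require Export complex.
Export GRing.Theory Num.Theory ComplexField.
Local Open Scope ring_scope.
Local Open Scope complex_scope.

Definition expi {R : realType} (theta : R) : R[i] := cos theta +i* sin theta.

Definition charq {R : realType} (alpha b vp theta : R) (z : R[i]) : R[i] :=
  z ^+ 2 + z * (alpha%:C - b%:C * (expi theta - 1))
  - (alpha * vp)%:C * (expi theta - 1).

Definition purely_imaginary {R : realType} (z : R[i]) : Prop :=
  exists y : R, z = 'i * y%:C.

(* Main.v *)
Require Import Defs.
From mathcomp Require Import all_boot all_algebra.
From mathcomp Require Import all_classical all_reals all_analysis.
From mathcomp Require Import complex.
From mathcomp Require Import ring lra.
Import GRing.Theory Num.Theory ComplexField.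
Local Open Scope ring_scope.
Local Open Scope complex_scope.
Lemma charq_iy (R : realType) (a b v th y : R) :
  charq a b v th ('i * y%:C) =
  (- y ^+ 2 + y * b * sin th - a * v * (cos th - 1)) +i*
  (y * (a - b * (cos th - 1)) - a * v * sin th).
Proof.
rewrite /charq /expi /=.
apply/eqP; rewrite eq_complex /=; apply/andP; split; apply/eqP; ring.
Qed.

Lemma cplx0 (R : realType) (p q : R) : (p +i* q = 0 :> R[i]) <-> (p = 0 /\ q = 0).
Proof. split; [by case=> -> -> | by case=> -> ->]. Qed.
Lemma alg (R : realType) (a b v S C : R) : 0 < a -> 0 <= b -> 0 < v -> 0 < S ->
  C != 0 -> C ^+ 2 = 1 - S ^+ 2 ->
  (exists y, - y ^+ 2 + y * b * (2 * S * C) - a * v * (C ^+ 2 - S ^+ 2 - 1) = 0 /\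
             y * (a - b * (C ^+ 2 - S ^+ 2 - 1)) - a * v * (2 * S * C) = 0) <->
  2 * a * C ^+ 2 * v = a ^+ 2 + 2 * a * b * C ^+ 2 + 4 * S ^+ 2 * b * (a + b).
Proof.
move=> a0 b0 v0 S0 C0 hC2.
have hd : C ^+ 2 - S ^+ 2 - 1 = - 2 * S ^+ 2 by rewrite hC2; ring.
rewrite hd.
have K0 : 0 < a + 2 * b * S ^+ 2.
  have : 0 <= b * S ^+ 2 by apply: mulr_ge0 => //; apply: sqr_ge0.
  lra.
have Kn0 : a + 2 * b * S ^+ 2 != 0 by rewrite lt0r_neq0.
have avS : 2 * a * v * S ^+ 2 != 0.
  by rewrite lt0r_neq0 // !mulr_gt0 // exprn_gt0.
split.
- move=> [y [E1 E2]].
  have key : 2 * a * v * S ^+ 2 * (- 2 * a * v * C ^+ 2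
      + 2 * b * C ^+ 2 * (a + 2 * b * S ^+ 2) + (a + 2 * b * S ^+ 2) ^+ 2) = 0.
    have -> : 2 * a * v * S ^+ 2 * (- 2 * a * v * C ^+ 2
      + 2 * b * C ^+ 2 * (a + 2 * b * S ^+ 2) + (a + 2 * b * S ^+ 2) ^+ 2) =
      (a + 2 * b * S ^+ 2) ^+ 2 * (- y ^+ 2 + y * b * (2 * S * C) - a * v * (- 2 * S ^+ 2))
      + (y * (a + 2 * b * S ^+ 2) + a * v * (2 * S * C) - 2 * b * S * C * (a + 2 * b * S ^+ 2))
        * (y * (a - b * (- 2 * S ^+ 2)) - a * v * (2 * S * C)) by ring.
    by rewrite E1 E2; ring.
  move/eqP: key; rewrite mulf_eq0 (negbTE avS) /= => /eqP X.
  apply/eqP; rewrite -subr_eq0.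
  have -> : 2 * a * C ^+ 2 * v - (a ^+ 2 + 2 * a * b * C ^+ 2 + 4 * S ^+ 2 * b * (a + b)) =
    - (- 2 * a * v * C ^+ 2 + 2 * b * C ^+ 2 * (a + 2 * b * S ^+ 2) + (a + 2 * b * S ^+ 2) ^+ 2)
    + 4 * b ^+ 2 * S ^+ 2 * (C ^+ 2 - (1 - S ^+ 2)) by ring.
  by rewrite X hC2; apply/eqP; ring.
- move=> Hv.
  pose y := a * v * (2 * S * C) / (a + 2 * b * S ^+ 2).
  exists y; split; last first.
    have -> : a - b * (- 2 * S ^+ 2) = a + 2 * b * S ^+ 2 by ring.
    by rewrite /y divfK // subrr.
  have K2 : (a + 2 * b * S ^+ 2) ^+ 2 != 0 by rewrite expf_neq0.
  apply/eqP; rewrite -(mulrI_eq0 _ (mulfI K2)); apply/eqP.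
  have -> : (a + 2 * b * S ^+ 2) ^+ 2 * (- y ^+ 2 + y * b * (2 * S * C) - a * v * (- 2 * S ^+ 2))
     = 2 * a * v * S ^+ 2 * (- (2 * a * C ^+ 2 * v)
      + 2 * b * C ^+ 2 * (a + 2 * b * S ^+ 2) + (a + 2 * b * S ^+ 2) ^+ 2).
    by rewrite /y; field.
  rewrite Hv hC2; ring.
Qed.

Theorem mainTheorem2 (R : realType) (V : R -> R) (alpha beta h theta : R) :
  0 < alpha -> 0 <= beta -> 0 < h ->
  derivable V h 1 -> 0 < derive1 V h ->
  0 < theta < 2 * pi ->
  let b := beta / h ^+ 2 in
  let vp := derive1 V h in
  (theta = pi ->
     ~ exists z : R[i], purely_imaginary z /\ charq alpha b vp theta z = 0) /\
  (theta <> pi ->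
     ((exists z : R[i], purely_imaginary z /\ charq alpha b vp theta z = 0) <->
      vp = alpha / (2 * cos (theta / 2) ^+ 2) + b
           + 2 * tan (theta / 2) ^+ 2 * b * (b / alpha + 1))).
Proof.
move=> a0 be0 h0 _ vp0 /andP[th0 th2] b vp.
have b0 : 0 <= b by rewrite /b divr_ge0 // sqr_ge0.
have E : forall z, (exists y : R, z = 'i * y%:C) /\ charq alpha b vp theta z = 0 <->
  exists y : R, z = 'i * y%:C /\
   (- y ^+ 2 + y * b * sin theta - alpha * vp * (cos theta - 1) = 0 /\
    y * (alpha - b * (cos theta - 1)) - alpha * vp * sin theta = 0).
  move=> z; split.
    by move=> [[y ->]]; rewrite charq_iy => /cplx0 H; exists y.
  by move=> [y [-> H]]; split; [exists y | rewrite charq_iy; apply/cplx0].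
split.
  move=> thpi [z /E [y [_ [E1 E2]]]].
  rewrite thpi sinpi cospi in E1 E2.
  have y0 : y = 0.
    move/eqP: E2; rewrite mulr0 subr0 mulf_eq0 => /orP[/eqP //|].
    have : 0 < alpha - b * (-1 - 1) by lra.
    by move=> /lt0r_neq0 /negbTE ->.
  rewrite y0 in E1.
  have : 0 < alpha * vp by rewrite mulr_gt0.
  lra.
move=> thpi.
set t := theta / 2.
have tht : theta = t + t by rewrite /t; field.
have t0 : 0 < t < pi by apply/andP; split; rewrite /t; lra.
have S0 : 0 < sin t by apply: sin_gt0_pi.
have hs : sin theta = 2 * sin t * cos t by rewrite tht sinD; ring.
have hc : cos theta = cos t ^+ 2 - sin t ^+ 2 by rewrite tht cosD; ring.
have hC2 : cos t ^+ 2 = 1 - sin t ^+ 2 by have := cos2Dsin2 t; lra.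
have pi0 := pi_gt0 R.
have C0 : cos t != 0.
  apply/eqP => Ct.
  have : t = pi / 2.
    apply: cos_inj; rewrite ?in_itv /= ?Ct ?cos_pihalf //; apply/andP; split; lra.
  by move=> tp; apply: thpi; rewrite tht tp; field.
have -> : alpha / (2 * cos t ^+ 2) + b + 2 * tan t ^+ 2 * b * (b / alpha + 1) =
  (alpha ^+ 2 + 2 * alpha * b * cos t ^+ 2 + 4 * sin t ^+ 2 * b * (alpha + b))
    / (2 * alpha * cos t ^+ 2).
  rewrite /tan; field; apply/andP; split => //; exact: lt0r_neq0.
have a00 : alpha != 0 by exact: lt0r_neq0.
have -> : (vp = (alpha ^+ 2 + 2 * alpha * b * cos t ^+ 2 + 4 * sin t ^+ 2 * b * (alpha + b))
    / (2 * alpha * cos t ^+ 2)) <->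
   (2 * alpha * cos t ^+ 2 * vp =
      alpha ^+ 2 + 2 * alpha * b * cos t ^+ 2 + 4 * sin t ^+ 2 * b * (alpha + b)).
  split=> [-> | <-]; field; apply/andP; split => //.
rewrite -(@alg R _ _ _ _ _ a0 b0 vp0 S0 C0 hC2).
split.
  move=> [z /E [y [_ [E1 E2]]]]; exists y; split.
    by rewrite -E1 hs hc.
  by rewrite -E2 hs hc.
move=> [y [E1 E2]]; exists ('i * y%:C); apply/E; exists y; split => //.
by rewrite hs hc.
Qed.
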